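(* In the setting described in the context, the quantum dimension \[ \dim_1:=(\ ,\ )_1(g_1) \] satisfies, modulo $\lambda^2$, \[ \dim_1=n+\frac{\lambda}{2}\{g_{\mu\nu},g^{\mu\nu}\}=n+\frac{\lambda}{2}\,\omega^{\alpha\beta}g_{\mu\nu,\alpha}\,g^{\mu\nu}{}_{,\beta}, \] where $n=\dim M$.
   Context: Let $M$ be a smooth $n$-manifold with local coordinates $x^\mu$. Commas denote partial derivatives ($f_{,\alpha}=\partial_\alpha f$) and repeated indices are summed. $g_{\mu\nu}$ is a (pseudo-)Riemannian metric with inverse $g^{\mu\nu}$, which is used to raise and lower indices. $\widehat\Gamma^\alpha{}_{\beta\gamma}$ are its Levi-Civita Christoffel symbols and $\widehat\nabla$ is its Levi-Civita connection. $\nabla$ is a further linear connection with Christoffel symbols $\Gamma^\alpha{}_{\beta\gamma}$, in the convention $\nabla_\beta dx^\alpha=-\Gamma^\alpha{}_{\beta\gamma}dx^\gamma$. Thus $\nabla_\beta\eta_\alpha=\partial_\beta\eta_\alpha-\eta_\gamma\Gamma^\gamma{}_{\beta\alpha}$ and $\nabla_\beta V^\alpha=\partial_\beta V^\alpha+\Gamma^\alpha{}_{\beta\gamma}V^\gamma$, extended to all tensors in the usual way; a semicolon also denotes $\nabla$. The associated tensors are: - torsion $T^\alpha{}_{\beta\gamma}=\Gamma^\alpha{}_{\beta\gamma}-\Gamma^\alpha{}_{\gamma\beta}$; - curvature $R^\alpha{}_{\beta\gamma\delta}=\Gamma^\alpha{}_{\delta\beta,\gamma}-\Gamma^\alpha{}_{\gamma\beta,\delta}+\Gamma^\kappa{}_{\delta\beta}\Gamma^\alpha{}_{\gamma\kappa}-\Gamma^\kappa{}_{\gamma\beta}\Gamma^\alpha{}_{\delta\kappa}$;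 - contorsion $S^\alpha{}_{\beta\gamma}=\Gamma^\alpha{}_{\beta\gamma}-\widehat\Gamma^\alpha{}_{\beta\gamma}$; - lowered symbols $\Gamma_{\mu\beta\nu}=g_{\mu\kappa}\Gamma^\kappa{}_{\beta\nu}$. Standing assumptions: - $\nabla$ is metric compatible, $\nabla g=0$, equivalently $g_{\mu\nu,\beta}=\Gamma_{\mu\beta\nu}+\Gamma_{\nu\beta\mu}$. - $\omega^{\alpha\beta}=-\omega^{\beta\alpha}$ is a Poisson bivector (it satisfies the Jacobi identity), with $\{f,h\}=\omega^{\alpha\beta}f_{,\alpha}h_{,\beta}$. - $\nabla$ is Poisson-compatible: $\nabla_\gamma\omega^{\alpha\beta}+T^\alpha{}_{\delta\gamma}\omega^{\delta\beta}+T^\beta{}_{\delta\gamma}\omega^{\alpha\delta}=0$. $\lambda$ is a formal parameter and all identities are taken modulo $\lambda^2$. The quantised products, for functions $f,h$ and 1-forms $\eta$, are - $f\bullet h=fh+\frac\lambda2\{f,h\}$; - $f\bullet\eta=f\eta+\frac\lambda2\omega^{\alpha\beta}f_{,\alpha}\nabla_\beta\eta$; - $\eta\bullet f=\eta f-\frac\lambda2\omega^{\alpha\beta}f_{,\alpha}\nabla_\beta\eta$. Commutators are $[f,\eta]=f\bullet\eta-\eta\bullet f$. Quantum metric data: - $\otimes_1$ is the tensor product of 1-forms over the quantised function algebra, i.e. it satisfies $\eta\bullet f\otimes_1\zeta=\eta\otimes_1 f\bullet\zeta$. - $\mathcal R_{\mu\nu}=\frac12 g_{\alpha\beta}\omega^{\alpha\gamma}(\nabla_\gamma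 T^\beta{}_{\mu\nu}-R^\beta{}_{\mu\nu\gamma}+R^\beta{}_{\nu\mu\gamma})$. - $h_{\mu\nu}=\mathcal R_{\mu\nu}+\omega^{\alpha\beta}(\Gamma_{\mu\alpha\kappa}\Gamma^\kappa{}_{\beta\nu}+\Gamma^\gamma{}_{\alpha\mu}g_{\gamma\nu,\beta})$, which is antisymmetric. - $\tilde g_{\mu\nu}=g_{\mu\nu}+\frac\lambda2h_{\mu\nu}$, and the quantum metric is $g_1=dx^\mu\bullet\tilde g_{\mu\nu}\otimes_1dx^\nu$. - $\tilde g^{\mu\nu}$ is the $\bullet$-inverse matrix: $\tilde g_{\mu\nu}\bullet\tilde g^{\nu\gamma}=\delta_\mu^\gamma=\tilde g^{\gamma\nu}\bullet\tilde g_{\nu\mu}$. - $(\ ,\ )_1:\Omega^1\otimes_1\Omega^1\to C^\infty(M)$ is the bimodule map with $(dx^\mu,dx^\nu)_1=\tilde g^{\mu\nu}$ and $(f\bullet\eta,\zeta\bullet k)_1=f\bullet(\eta,\zeta)_1\bullet k$. *)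

(* Defs.v *)
(* Local-coordinate model of the setting of Proposition 2.1.
   - A : commutative R-algebra (R a numeric field, e.g. the reals) playing the
     role of the algebra of smooth functions on a coordinate chart;
   - d i : the coordinate partial derivative d/dx^i (i : 'I_n), axiomatised as
     n commuting R-linear derivations;
   - an element of A * A, (a0, a1), stands for a0 + lambda a1 (mod lambda^2);
   - a 1-form mod lambda^2 is its coefficient vector w.r.t. dx^0..dx^(n-1),
     eta = sum_c (eta c) dx^c, with coefficients in A * A. *)
From HB Require Import structures.
From mathcomp Require Import all_boot all_order all_algebra.
Set Implicit Arguments.
Unset Strict Implicit.
Unset Printing Implicit Defensive.
Import GRing.Theory Num.Theory.
Local Open Scope ring_scope.

Definition halfR (R : numFieldType) : R := 2^-1.

Definition derivations (R : numFieldType) (A : comAlgType R) (n : nat)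
  (d : 'I_n -> A -> A) : Prop :=
  [/\ (forall i x y, d i (x + y) = d i x + d i y),
      (forall i x y, d i (x * y) = d i x * y + x * d i y),
      (forall i (c : R) x, d i (c *: x) = c *: d i x)
    & (forall i j x, d i (d j x) = d j (d i x))].

Definition pbr (R : numFieldType) (A : comAlgType R) (n : nat)
  (d : 'I_n -> A -> A) (om : 'I_n -> 'I_n -> A) (f h : A) : A :=
  \sum_(a < n) \sum_(b < n) om a b * d a f * d b h.

Definition jacobi (R : numFieldType) (A : comAlgType R) (n : nat)
  (d : 'I_n -> A -> A) (om : 'I_n -> 'I_n -> A) : Prop :=
  forall a b c, \sum_(e < n) (om a e * d e (om b c) + om b e * d e (om c a)
                              + om c e * d e (om a b)) = 0.

(* Gam a b c = Gamma^a_{bc} *)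
Definition torsion (A : zmodType) (n : nat) (Gam : 'I_n -> 'I_n -> 'I_n -> A)
  (a b c : 'I_n) : A := Gam a b c - Gam a c b.

(* curv a b c e = R^a_{bce} *)
Definition curv (R : numFieldType) (A : comAlgType R) (n : nat)
  (d : 'I_n -> A -> A) (Gam : 'I_n -> 'I_n -> 'I_n -> A) (a b c e : 'I_n) : A :=
  d c (Gam a e b) - d e (Gam a c b)
  + \sum_(k < n) Gam k e b * Gam a c k - \sum_(k < n) Gam k c b * Gam a e k.

Definition Gam_low (R : numFieldType) (A : comAlgType R) (n : nat)
  (g : 'I_n -> 'I_n -> A) (Gam : 'I_n -> 'I_n -> 'I_n -> A) (m b v : 'I_n) : A :=
  \sum_(k < n) g m k * Gam k b v.

Definition metric_compat (R : numFieldType) (A : comAlgType R) (n : nat)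
  (d : 'I_n -> A -> A) (g : 'I_n -> 'I_n -> A) (Gam : 'I_n -> 'I_n -> 'I_n -> A) : Prop :=
  forall m b v, d b (g m v) = Gam_low g Gam m b v + Gam_low g Gam v b m.

Definition nabla_om (R : numFieldType) (A : comAlgType R) (n : nat)
  (d : 'I_n -> A -> A) (om : 'I_n -> 'I_n -> A) (Gam : 'I_n -> 'I_n -> 'I_n -> A)
  (c a b : 'I_n) : A :=
  d c (om a b) + \sum_(e < n) Gam a c e * om e b + \sum_(e < n) Gam b c e * om a e.

Definition poisson_compat (R : numFieldType) (A : comAlgType R) (n : nat)
  (d : 'I_n -> A -> A) (om : 'I_n -> 'I_n -> A) (Gam : 'I_n -> 'I_n -> 'I_n -> A) : Prop :=
  forall c a b, nabla_om d om Gam c a b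
     + \sum_(e < n) torsion Gam a e c * om e b
     + \sum_(e < n) torsion Gam b e c * om a e = 0.

Definition nabla_T (R : numFieldType) (A : comAlgType R) (n : nat)
  (d : 'I_n -> A -> A) (Gam : 'I_n -> 'I_n -> 'I_n -> A) (c b m v : 'I_n) : A :=
  d c (torsion Gam b m v) + \sum_(k < n) Gam b c k * torsion Gam k m v
  - \sum_(k < n) torsion Gam b k v * Gam k c m
  - \sum_(k < n) torsion Gam b m k * Gam k c v.

Definition calR (R : numFieldType) (A : comAlgType R) (n : nat)
  (d : 'I_n -> A -> A) (om : 'I_n -> 'I_n -> A) (Gam : 'I_n -> 'I_n -> 'I_n -> A)
  (g : 'I_n -> 'I_n -> A) (m v : 'I_n) : A :=
  halfR R *: \sum_(a < n) \sum_(b < n) \sum_(c < n)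
     g a b * om a c * (nabla_T d Gam c b m v - curv d Gam b m v c + curv d Gam b v m c).

Definition hq (R : numFieldType) (A : comAlgType R) (n : nat)
  (d : 'I_n -> A -> A) (om : 'I_n -> 'I_n -> A) (Gam : 'I_n -> 'I_n -> 'I_n -> A)
  (g : 'I_n -> 'I_n -> A) (m v : 'I_n) : A :=
  calR d om Gam g m v
  + \sum_(a < n) \sum_(b < n) om a b *
      (\sum_(k < n) Gam_low g Gam m a k * Gam k b v
       + \sum_(c < n) Gam c a m * d b (g c v)).

Definition gtilde (R : numFieldType) (A : comAlgType R) (n : nat)
  (d : 'I_n -> A -> A) (om : 'I_n -> 'I_n -> A) (Gam : 'I_n -> 'I_n -> 'I_n -> A)
  (g : 'I_n -> 'I_n -> A) (m v : 'I_n) : A * A :=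
  (g m v, halfR R *: hq d om Gam g m v).

Definition qadd (A : zmodType) (x y : A * A) : A * A := (x.1 + y.1, x.2 + y.2).

(* f . h = f h + lambda/2 {f,h}, extended lambda-linearly *)
Definition qmul (R : numFieldType) (A : comAlgType R) (n : nat)
  (d : 'I_n -> A -> A) (om : 'I_n -> 'I_n -> A) (x y : A * A) : A * A :=
  (x.1 * y.1, x.1 * y.2 + x.2 * y.1 + halfR R *: pbr d om x.1 y.1).

Definition qform (A : Type) (n : nat) := 'I_n -> A * A.

Definition fadd (A : zmodType) (n : nat) (eta zeta : qform A n) : qform A n :=
  fun c => qadd (eta c) (zeta c).

Definition dx (A : nzRingType) (n : nat) (mu : 'I_n) : qform A n :=
  fun c => ((c == mu)%:R, 0).
Arguments dx {A n} mu.

Definition nabla_form (R : numFieldType) (A : comAlgType R) (n : nat)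
  (d : 'I_n -> A -> A) (Gam : 'I_n -> 'I_n -> 'I_n -> A)
  (eta : 'I_n -> A) (b c : 'I_n) : A :=
  d b (eta c) - \sum_(k < n) eta k * Gam k b c.

(* f . eta = f eta + lambda/2 om^{ab} f_{,a} nabla_b eta  (lambda-linearly) *)
Definition fdotl (R : numFieldType) (A : comAlgType R) (n : nat)
  (d : 'I_n -> A -> A) (om : 'I_n -> 'I_n -> A) (Gam : 'I_n -> 'I_n -> 'I_n -> A)
  (f : A * A) (eta : qform A n) : qform A n :=
  fun c => (f.1 * (eta c).1,
            f.1 * (eta c).2 + f.2 * (eta c).1
            + halfR R *: \sum_(a < n) \sum_(b < n)
                om a b * d a f.1 * nabla_form d Gam (fun k => (eta k).1) b c).

(* eta . f = eta f - lambda/2 om^{ab} f_{,a} nabla_b eta  (lambda-linearly) *)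
Definition fdotr (R : numFieldType) (A : comAlgType R) (n : nat)
  (d : 'I_n -> A -> A) (om : 'I_n -> 'I_n -> A) (Gam : 'I_n -> 'I_n -> 'I_n -> A)
  (eta : qform A n) (f : A * A) : qform A n :=
  fun c => ((eta c).1 * f.1,
            (eta c).2 * f.1 + (eta c).1 * f.2
            - halfR R *: \sum_(a < n) \sum_(b < n)
                om a b * d a f.1 * nabla_form d Gam (fun k => (eta k).1) b c).

(* ( , )_1 : a map on pairs of 1-forms which is biadditive, balanced
   (hence factors through the tensor product over the quantised algebra) and
   a bimodule map, with (dx^m, dx^v)_1 = gtinv m v. *)
Definition quantum_inner (R : numFieldType) (A : comAlgType R) (n : nat)
  (d : 'I_n -> A -> A) (om : 'I_n -> 'I_n -> A) (Gam : 'I_n -> 'I_n -> 'I_n -> A)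
  (gtinv : 'I_n -> 'I_n -> A * A) (P : qform A n -> qform A n -> A * A) : Prop :=
  [/\ (forall eta eta' zeta, P (fadd eta eta') zeta = qadd (P eta zeta) (P eta' zeta)),
      (forall eta zeta zeta', P eta (fadd zeta zeta') = qadd (P eta zeta) (P eta zeta')),
      (forall eta f zeta, P (fdotr d om Gam eta f) zeta = P eta (fdotl d om Gam f zeta)),
      (forall f eta zeta k, P (fdotl d om Gam f eta) (fdotr d om Gam zeta k)
                          = qmul d om (qmul d om f (P eta zeta)) k)
    & (forall m v, P (dx m) (dx v) = gtinv m v)].

Definition qsum2 (A : zmodType) (n : nat) (F : 'I_n -> 'I_n -> A * A) : A * A :=
  (\sum_(m < n) \sum_(v < n) (F m v).1, \sum_(m < n) \sum_(v < n) (F m v).2).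

Definition qsum (A : zmodType) (n : nat) (F : 'I_n -> A * A) : A * A :=
  (\sum_(v < n) (F v).1, \sum_(v < n) (F v).2).

(* Main.v *)
Require Import Defs.
From HB Require Import structures.
From mathcomp Require Import all_boot all_order all_algebra.
From mathcomp Require Import ring.
From Stdlib Require Import FunctionalExtensionality.
Import GRing.Theory Num.Theory.
Local Open Scope ring_scope.

Set Implicit Arguments.
Unset Strict Implicit.


Lemma half_add (R : numFieldType) (A : lmodType R) (x : A) :
  halfR R *: x + halfR R *: x = x.
Proof.
rewrite -scalerDl /halfR.
have -> : ((2:R)^-1 + 2^-1) = 1.
  by rewrite [RHS](splitr 1) mul1r.
by rewrite scale1r.
Qed.

Lemma double0 (R : numFieldType) (A : lmodType R) (x : A) : x + x = 0 -> x = 0.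
Proof. by move=> H; rewrite -[x]half_add -scalerDr H scaler0. Qed.

Lemma double_inj (R : numFieldType) (A : lmodType R) (x y : A) : x + x = y + y -> x = y.
Proof. by move=> H; rewrite -[x]half_add -[y]half_add -!scalerDr H. Qed.

Lemma anti_sum (R : numFieldType) (A : comAlgType R) (n : nat)
  (om F : 'I_n -> 'I_n -> A) :
  (forall a b, om a b = - om b a) -> (forall a b, F a b = F b a) ->
  \sum_(a < n) \sum_(b < n) om a b * F a b = 0.
Proof.
move=> Hom HF; apply: double0.
set s := (X in X + X).
have E : s = - s.
  rewrite {1}/s exchange_big /= /s -sumrN; apply: eq_bigr => b _.
  rewrite -sumrN; apply: eq_bigr => a _.
  by rewrite Hom HF mulNr.
by rewrite {1}E addNr.
Qed.

Lemma swap22 (A : nmodType) (n : nat) (F : 'I_n -> 'I_n -> 'I_n -> 'I_n -> A) :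
  \sum_(m < n) \sum_(v < n) \sum_(a < n) \sum_(b < n) F m v a b
  = \sum_(a < n) \sum_(b < n) \sum_(m < n) \sum_(v < n) F m v a b.
Proof.
rewrite (eq_bigr (fun m => \sum_(a < n) \sum_(v < n) \sum_(b < n) F m v a b));
  last by move=> m _; rewrite exchange_big.
rewrite exchange_big /=; apply: eq_bigr => a _.
rewrite (eq_bigr (fun m => \sum_(b < n) \sum_(v < n) F m v a b));
  last by move=> m _; rewrite exchange_big.
by rewrite exchange_big.
Qed.

Lemma sum_delta (A : nzRingType) (n : nat) (m : 'I_n) (F : 'I_n -> A) :
  \sum_(k < n) (k == m)%:R * F k = F m.
Proof.
rewrite (bigD1 m) //= eqxx mul1r big1 ?addr0 // => k /negbTE ->.
by rewrite mul0r.
Qed.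

Lemma sum_delta' (A : nzRingType) (n : nat) (m : 'I_n) (F : 'I_n -> A) :
  \sum_(k < n) F k * (m == k)%:R = F m.
Proof.
rewrite (bigD1 m) //= eqxx mulr1 big1 ?addr0 // => k; rewrite eq_sym => /negbTE ->.
by rewrite mulr0.
Qed.

Lemma d0 (R : numFieldType) (A : comAlgType R) (n : nat) (d : 'I_n -> A -> A) i :
  derivations d -> d i 0 = 0.
Proof.
case=> dadd _ _ _; apply: (addrI (d i 0)).
by rewrite addr0 -dadd addr0.
Qed.
Lemma d1 (R : numFieldType) (A : comAlgType R) (n : nat) (d : 'I_n -> A -> A) i :
  derivations d -> d i 1 = 0.
Proof.
case=> _ dmul _ _; have H := dmul i 1 1; rewrite !mul1r mulr1 in H.
by apply: (addrI (d i 1)); rewrite addr0 -H.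
Qed.
Lemma dnat (R : numFieldType) (A : comAlgType R) (n : nat) (d : 'I_n -> A -> A) i (b : bool) :
  derivations d -> d i (b%:R) = 0.
Proof. by case: b => Hd; [exact: d1 | exact: d0]. Qed.
Lemma dsum (R : numFieldType) (A : comAlgType R) (n : nat) (d : 'I_n -> A -> A) i
  (F : 'I_n -> A) : derivations d -> d i (\sum_(k < n) F k) = \sum_(k < n) d i (F k).
Proof.
move=> Hd; have [dadd _ _ _] := Hd.
by apply: (big_morph (d i)) => [x y|]; [exact: dadd | exact: d0].
Qed.



Lemma pbr_1 (R : numFieldType) (A : comAlgType R) (n : nat) (d : 'I_n -> A -> A) om x :
  derivations d -> pbr d om x 1 = 0.
Proof.
move=> Hd; rewrite /pbr big1 // => a _; rewrite big1 // => b _.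
by rewrite (d1 _ Hd) mulr0.
Qed.

Lemma pbr_0 (R : numFieldType) (A : comAlgType R) (n : nat) (d : 'I_n -> A -> A) om x :
  derivations d -> pbr d om 0 x = 0.
Proof.
move=> Hd; rewrite /pbr big1 // => a _; rewrite big1 // => b _.
by rewrite (d0 _ Hd) mulr0 mul0r.
Qed.

Lemma qmul_1 (R : numFieldType) (A : comAlgType R) (n : nat) (d : 'I_n -> A -> A) om x :
  derivations d -> qmul d om x (1, 0) = x.
Proof.
move=> Hd; case: x => x1 x2; rewrite /qmul /= pbr_1 // scaler0.
by rewrite !mulr1 mulr0 add0r addr0.
Qed.

Lemma qmul_0l (R : numFieldType) (A : comAlgType R) (n : nat) (d : 'I_n -> A -> A) om y z :
  derivations d -> qmul d om (0, y) z = (0, y * z.1).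
Proof.
move=> Hd; rewrite /qmul /= pbr_0 // scaler0.
by rewrite !mul0r add0r !addr0.
Qed.

Lemma nabla_dx (R : numFieldType) (A : comAlgType R) (n : nat) (d : 'I_n -> A -> A) Gam m b c :
  derivations d -> nabla_form d Gam (fun k => (@dx A n m k).1) b c = - Gam m b c.
Proof.
move=> Hd; rewrite /nabla_form /dx /= dnat // sub0r.
by rewrite sum_delta.
Qed.

Lemma fdotr_dx1 (R : numFieldType) (A : comAlgType R) (n : nat) (d : 'I_n -> A -> A) om Gam v :
  derivations d -> fdotr d om Gam (dx v) (1, 0) = dx v.
Proof.
move=> Hd; apply: functional_extensionality => c.
rewrite /fdotr /= big1 ?scaler0 ?subr0.
  by rewrite /dx /= mulr1 mulr0 mul0r addr0.
move=> a _; rewrite big1 // => b _.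
by rewrite (d1 _ Hd) mulr0 mul0r.
Qed.

Lemma fdotl_0 (R : numFieldType) (A : comAlgType R) (n : nat) (d : 'I_n -> A -> A) om Gam y eta :
  derivations d -> fdotl d om Gam (0, y) eta = fun c => (0, y * (eta c).1).
Proof.
move=> Hd; apply: functional_extensionality => c.
rewrite /fdotl /= big1 ?scaler0 ?addr0.
  by rewrite !mul0r add0r.
move=> a _; rewrite big1 // => b _.
by rewrite (d0 _ Hd) mulr0 mul0r.
Qed.

Lemma fdotr_decomp (R : numFieldType) (A : comAlgType R) (n : nat) (d : 'I_n -> A -> A) om Gam f m :
  derivations d ->
  fdotr d om Gam (dx m) f = fadd (fdotl d om Gam f (dx m))
    (fun c => (0, \sum_(a < n) \sum_(b < n) om a b * d a f.1 * Gam m b c)).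
Proof.
move=> Hd; apply: functional_extensionality => c.
rewrite /fdotr /fdotl /fadd /qadd /=.
set Y := \sum_(a < n) \sum_(b < n) om a b * d a f.1 * Gam m b c.
have E : \sum_(a < n) \sum_(b < n) om a b * d a f.1 *
           nabla_form d Gam (fun k => (@dx A n m k).1) b c = - Y.
  rewrite /Y -sumrN; apply: eq_bigr => a _.
  rewrite -sumrN; apply: eq_bigr => b _.
  by rewrite nabla_dx // mulrN.
rewrite E scalerN.
set hY := halfR R *: Y.
rewrite -[Y]half_add -/hY.
congr pair; rewrite /dx /=. by rewrite mulrC addr0.
ring.
Qed.

Lemma P_zero (R : numFieldType) (A : comAlgType R) (n : nat) (d : 'I_n -> A -> A) om Gam gtinv P zeta :
  quantum_inner d om Gam gtinv P -> P (fun _ => (0, 0)) zeta = (0, 0).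
Proof.
case=> Hadd _ _ _ _.
have H := Hadd (fun _ => (0, 0)) (fun _ => (0, 0)) zeta.
have E : fadd (fun _ : 'I_n => ((0 : A), (0 : A))) (fun _ => (0, 0)) = (fun _ => (0, 0)).
  by apply: functional_extensionality => c; rewrite /fadd /qadd /= addr0.
rewrite E in H; move: H; case: (P _ zeta) => p1 p2; rewrite /qadd /= => [[H1 H2]].
congr pair; apply: (addrI p1) + apply: (addrI p2); by rewrite addr0.
Qed.



Lemma P_sum (R : numFieldType) (A : comAlgType R) (n : nat) (d : 'I_n -> A -> A) om Gam gtinv P
  (s : seq 'I_n) (F : 'I_n -> qform A n) zeta :
  quantum_inner d om Gam gtinv P ->
  P (fun c => (\sum_(i <- s) (F i c).1, \sum_(i <- s) (F i c).2)) zeta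
  = (\sum_(i <- s) (P (F i) zeta).1, \sum_(i <- s) (P (F i) zeta).2).
Proof.
move=> HP; have [Hadd _ _ _ _] := HP.
elim: s => [|i s IH].
  have -> : (fun c : 'I_n => (\sum_(i <- [::]) (F i c).1, \sum_(i <- [::]) (F i c).2))
     = (fun _ => (0, 0)) by apply: functional_extensionality => c; rewrite !big_nil.
  by rewrite !big_nil (P_zero _ HP).
have -> : (fun c => (\sum_(j <- i :: s) (F j c).1, \sum_(j <- i :: s) (F j c).2))
   = fadd (F i) (fun c => (\sum_(j <- s) (F j c).1, \sum_(j <- s) (F j c).2)).
  by apply: functional_extensionality => c; rewrite /fadd /qadd /= !big_cons.
by rewrite Hadd IH /qadd /= !big_cons.
Qed.

Lemma P_fdotl_dx (R : numFieldType) (A : comAlgType R) (n : nat) (d : 'I_n -> A -> A) om Gam gtinv P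
  f m v :
  derivations d -> quantum_inner d om Gam gtinv P ->
  P (fdotl d om Gam f (dx m)) (dx v) = qmul d om f (gtinv m v).
Proof.
move=> Hd HP; have [_ _ _ Hbi Hdx] := HP.
by rewrite -(fdotr_dx1 om Gam v Hd) Hbi Hdx qmul_1.
Qed.

Lemma P_Yform (R : numFieldType) (A : comAlgType R) (n : nat) (d : 'I_n -> A -> A) om Gam gtinv P
  (y : 'I_n -> A) v :
  derivations d -> quantum_inner d om Gam gtinv P ->
  P (fun c => (0, y c)) (dx v) = (0, \sum_(c < n) y c * (gtinv c v).1).
Proof.
move=> Hd HP.
have -> : (fun c => (0, y c)) = (fun c' => (\sum_(c < n) (fdotl d om Gam (0, y c) (dx c) c').1,
                                           \sum_(c < n) (fdotl d om Gam (0, y c) (dx c) c').2)).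
  apply: functional_extensionality => c'.
  congr pair.
    by rewrite big1 // => c _; rewrite fdotl_0.
  by rewrite (eq_bigr (fun c => y c * (c' == c)%:R)) ?sum_delta' // => c _; rewrite fdotl_0.
rewrite (P_sum _ _ _ HP); congr pair.
  by rewrite big1 // => c _; rewrite (P_fdotl_dx _ _ _ Hd HP) qmul_0l.
by apply: eq_bigr => c _; rewrite (P_fdotl_dx _ _ _ Hd HP) qmul_0l.
Qed.



Lemma tr_mulT (A : comNzRingType) (n : nat) (X Y : 'M[A]_n) :
  \tr (X *m Y^T) = \sum_(m < n) \sum_(v < n) X m v * Y m v.
Proof.
rewrite /mxtrace; apply: eq_bigr => i _; rewrite mxE; apply: eq_bigr => j _.
by rewrite mxE.
Qed.

Lemma mat_inv (A : comNzRingType) (n : nat) (g ginv : 'I_n -> 'I_n -> A) :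
  (forall m c, \sum_(v < n) g m v * ginv v c = (m == c)%:R) ->
  (\matrix_(i, j) g i j) *m (\matrix_(i, j) ginv i j) = 1%:M.
Proof.
move=> H; apply/matrixP => i j; rewrite !mxE -H.
by apply: eq_bigr => k _; rewrite !mxE.
Qed.

Lemma ginv_symm (A : comNzRingType) (n : nat) (g ginv : 'I_n -> 'I_n -> A) :
  (forall m v, g m v = g v m) ->
  (forall m c, \sum_(v < n) g m v * ginv v c = (m == c)%:R) ->
  (forall m c, \sum_(v < n) ginv m v * g v c = (m == c)%:R) ->
  forall m v, ginv m v = ginv v m.
Proof.
move=> Hs H1 H2.
pose G := \matrix_(i, j) g i j; pose Gi := \matrix_(i, j) ginv i j.
have GGi : G *m Gi = 1%:M by exact: mat_inv.
have GiG : Gi *m G = 1%:M by exact: mat_inv.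
have GT : G^T = G by apply/matrixP => i j; rewrite !mxE.
have GiT : Gi^T = Gi.
  rewrite -[Gi^T]mulmx1 -GGi mulmxA -{1}GT -trmx_mul GGi trmx1.
  by rewrite mul1mx.
move=> m v; have := congr1 (fun M : 'M_n => M v m) GiT.
by rewrite !mxE.
Qed.

Lemma SX_zero (R : numFieldType) (A : comAlgType R) (n : nat)
  (d : 'I_n -> A -> A) (om : 'I_n -> 'I_n -> A)
  (Gam : 'I_n -> 'I_n -> 'I_n -> A) (g ginv : 'I_n -> 'I_n -> A) :
  derivations d ->
  (forall m v, g m v = g v m) ->
  (forall m c, \sum_(v < n) g m v * ginv v c = (m == c)%:R) ->
  (forall m c, \sum_(v < n) ginv m v * g v c = (m == c)%:R) ->
  metric_compat d g Gam ->
  (forall a b, om a b = - om b a) ->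
  \sum_(m < n) \sum_(v < n) \sum_(a < n) \sum_(b < n)
      om a b * d a (g m v) * d b (ginv m v) = 0
  /\ \sum_(m < n) \sum_(v < n) \sum_(a < n) \sum_(b < n)
      om a b * (d a (g m v) * \sum_(c < n) Gam m b c * ginv c v) = 0.
Proof.
move=> Hd Hs H1 H2 Hmet Hom.
have [dadd dmul _ _] := Hd.
have Hgis := ginv_symm Hs H1 H2.
pose G := \matrix_(i, j) g i j; pose Gi := \matrix_(i, j) ginv i j.
pose Ga a := \matrix_(i, j) d a (g i j).
pose Gia a := \matrix_(i, j) d a (ginv i j).
pose Gm b := \matrix_(i, j) Gam i b j.
have GGi : G *m Gi = 1%:M by exact: mat_inv.
have GiG : Gi *m G = 1%:M by exact: mat_inv.
have GT : G^T = G by apply/matrixP => i j; rewrite !mxE.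
have GiT : Gi^T = Gi by apply/matrixP => i j; rewrite !mxE.
have GaT a : (Ga a)^T = Ga a by apply/matrixP => i j; rewrite !mxE Hs.
have GGia a : G *m Gia a = - (Ga a *m Gi).
  apply/matrixP => i j; rewrite !mxE.
  apply/eqP; rewrite -addr_eq0; apply/eqP.
  transitivity (\sum_(k < n) d a (g i k * ginv k j)); last by rewrite -dsum // H1 dnat.
  rewrite -big_split /=; apply: eq_bigr => k _; rewrite !mxE dmul addrC.
  done.
have Gia_eq a : Gia a = - (Gi *m Ga a *m Gi).
  by rewrite -[Gia a]mul1mx -GiG -mulmxA GGia mulmxN mulmxA.
have GiaT a : (Gia a)^T = Gia a by apply/matrixP => i j; rewrite !mxE Hgis.
have Msym a b : \tr (Ga a *m Gi *m Ga b *m Gi) = \tr (Ga b *m Gi *m Ga a *m Gi).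
  by rewrite -mulmxA mxtrace_mulC !mulmxA.
have Hmetm b : Ga b = G *m Gm b + (Gm b)^T *m G.
  apply/matrixP => i j; rewrite !mxE Hmet /Gam_low; congr (_ + _).
    by apply: eq_bigr => k _; rewrite !mxE.
  by apply: eq_bigr => k _; rewrite !mxE mulrC Hs.
split.
  rewrite swap22.
  rewrite (eq_bigr (fun a => \sum_(b < n) om a b * - \tr (Ga a *m Gi *m Ga b *m Gi))).
    by apply: anti_sum => // a b; rewrite Msym.
  move=> a _; apply: eq_bigr => b _.
  have E : Ga a *m Gi *m Ga b *m Gi = - (Ga a *m (Gia b)^T).
    by rewrite GiaT Gia_eq mulmxN !mulmxA opprK.
  rewrite E raddfN /= opprK tr_mulT mulr_sumr; apply: eq_bigr => m _.
  rewrite mulr_sumr; apply: eq_bigr => v _; rewrite !mxE mulrA.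
  done.
rewrite swap22.
rewrite (eq_bigr (fun a => \sum_(b < n) om a b * (halfR R *: \tr (Gi *m Ga a *m Gi *m Ga b)))).
  apply: anti_sum => // a b.
  have Mc x y : \tr (Gi *m Ga x *m Gi *m Ga y) = \tr (Ga x *m Gi *m Ga y *m Gi).
    by rewrite -!mulmxA mxtrace_mulC !mulmxA.
  by rewrite !Mc Msym.
move=> a _; apply: eq_bigr => b _.
have LL : \tr (Gi *m Ga a *m Gi *m Ga b) = \tr (Ga a *m (Gm b *m Gi)^T) + \tr (Ga a *m (Gm b *m Gi)^T).
  rewrite trmx_mul GiT.
  rewrite (Hmetm b) mulmxDr mxtraceD; congr (_ + _).
    rewrite mulmxA -(mulmxA _ Gi G) GiG mulmx1.
    by rewrite -mxtrace_tr !trmx_mul GaT GiT mxtrace_mulC -mulmxA.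
  by rewrite mulmxA mxtrace_mulC !mulmxA GGi mul1mx -mulmxA.
rewrite LL scalerDr half_add tr_mulT mulr_sumr; apply: eq_bigr => m _.
rewrite mulr_sumr; apply: eq_bigr => v _; rewrite !mxE.
congr (_ * (_ * _)); apply: eq_bigr => c _; rewrite !mxE.
done.
Qed.


Unset Implicit Arguments.
Set Strict Implicit.

Theorem proposition2p1 (R : numFieldType) (A : comAlgType R) (n : nat)
  (d : 'I_n -> A -> A) (om : 'I_n -> 'I_n -> A)
  (Gam : 'I_n -> 'I_n -> 'I_n -> A)
  (g ginv : 'I_n -> 'I_n -> A)
  (gtinv : 'I_n -> 'I_n -> A * A)
  (P : qform A n -> qform A n -> A * A) :
  derivations d ->
  (* g symmetric, with inverse matrix g^{mu nu} *)
  (forall m v, g m v = g v m) ->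
  (forall m c, \sum_(v < n) g m v * ginv v c = (m == c)%:R) ->
  (forall m c, \sum_(v < n) ginv m v * g v c = (m == c)%:R) ->
  (* nabla g = 0 *)
  metric_compat d g Gam ->
  (* om is a Poisson bivector *)
  (forall a b, om a b = - om b a) ->
  jacobi d om ->
  (* nabla is Poisson-compatible *)
  poisson_compat d om Gam ->
  (* gtinv is the bullet-inverse matrix of gtilde *)
  (forall m c, qsum (fun v => qmul d om (gtilde d om Gam g m v) (gtinv v c))
               = ((m == c)%:R, 0)) ->
  (forall c m, qsum (fun v => qmul d om (gtinv c v) (gtilde d om Gam g v m))
               = ((c == m)%:R, 0)) ->
  (* P = ( , )_1 *)
  quantum_inner d om Gam gtinv P ->
  (* dim_1 = ( , )_1 (g_1),  g_1 = dx^mu . gtilde_{mu nu} (x)_1 dx^nu *)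
  let dim1 := qsum2 (fun m v => P (fdotr d om Gam (dx m) (gtilde d om Gam g m v)) (dx v)) in
  dim1 = (n%:R, halfR R *: \sum_(m < n) \sum_(v < n) pbr d om (g m v) (ginv m v))
  /\ dim1 = (n%:R, halfR R *: \sum_(m < n) \sum_(v < n) \sum_(a < n) \sum_(b < n)
                      om a b * d a (g m v) * d b (ginv m v)).
Proof.
move=> Hd Hs H1 H2 Hmet Hom Hjac Hpc Hl Hr HP dim1.
have Hgis := ginv_symm Hs H1 H2.
have [S0 X0] := @SX_zero R A n d om Gam g ginv Hd Hs H1 H2 Hmet Hom.
have G1 : forall i j, (gtinv i j).1 = ginv i j.
  pose G := \matrix_(i, j) g i j; pose Gi := \matrix_(i, j) ginv i j.
  pose T1 := \matrix_(i, j) (gtinv i j).1.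
  have GiG : Gi *m G = 1%:M by exact: mat_inv.
  have GT1 : G *m T1 = 1%:M.
    apply: mat_inv => m c; have := congr1 fst (Hl m c); rewrite /qsum /=.
    by [].
  have E : T1 = Gi by rewrite -[T1]mul1mx -GiG -mulmxA GT1 mulmx1.
  by move=> i j; have := congr1 (fun M : 'M_n => M i j) E; rewrite !mxE.
have Hterm m v : P (fdotr d om Gam (dx m) (gtilde d om Gam g m v)) (dx v)
   = qadd (qmul d om (gtilde d om Gam g m v) (gtinv m v))
          (0, \sum_(c < n) (\sum_(a < n) \sum_(b < n) om a b * d a (g m v) * Gam m b c)
                * (gtinv c v).1).
  have [Hadd _ _ _ _] := HP.
  rewrite fdotr_decomp // Hadd (P_fdotl_dx _ _ _ Hd HP) (P_Yform _ _ Hd HP).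
  by [].
suff -> : dim1 = (n%:R, 0) by split; rewrite ?/pbr S0 scaler0.
rewrite /dim1 /qsum2; congr pair.
  rewrite (eq_bigr (fun m : 'I_n => 1)) ?sumr_const ?card_ord //.
  move=> m _; transitivity (\sum_(v < n) g m v * ginv v m); last by rewrite H1 eqxx.
  by apply: eq_bigr => v _; rewrite Hterm /qadd /qmul /gtilde /= G1 addr0 Hgis.
have Xeq m v : \sum_(c < n) (\sum_(a < n) \sum_(b < n) om a b * d a (g m v) * Gam m b c)
                * (gtinv c v).1
   = \sum_(a < n) \sum_(b < n) om a b * (d a (g m v) * \sum_(c < n) Gam m b c * ginv c v).
  rewrite (eq_bigr (fun c => \sum_(a < n) \sum_(b < n) om a b * d a (g m v) * Gam m b c * ginv c v)); last first.
    by move=> c _; rewrite G1 mulr_suml; apply: eq_bigr => a _; rewrite mulr_suml.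
  rewrite exchange_big; apply: eq_bigr => a _; rewrite exchange_big; apply: eq_bigr => b _.
  by rewrite !mulr_sumr; apply: eq_bigr => c _; rewrite !mulrA.
rewrite (eq_bigr (fun m => \sum_(v < n) (qmul d om (gtilde d om Gam g m v) (gtinv m v)).2
     + \sum_(v < n) \sum_(a < n) \sum_(b < n) om a b * (d a (g m v) * \sum_(c < n) Gam m b c * ginv c v)));
  last by move=> m _; rewrite -big_split; apply: eq_bigr => v _; rewrite Hterm /qadd /= Xeq.
rewrite big_split /= X0 addr0.
have Hd_m m : \sum_(v < n) (qmul d om (gtilde d om Gam g m v) (gtinv v m)).2 = 0.
  by have := congr1 snd (Hl m m); rewrite /qsum /=.
have Hpt m v : (qmul d om (gtilde d om Gam g m v) (gtinv m v)).2
   = (qmul d om (gtilde d om Gam g m v) (gtinv v m)).2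
     + (g m v * (gtinv m v).2 - g m v * (gtinv v m).2).
  rewrite /qmul /gtilde /= !G1 (Hgis v m); ring.
rewrite (eq_bigr (fun m => \sum_(v < n) (qmul d om (gtilde d om Gam g m v) (gtinv v m)).2
     + \sum_(v < n) (g m v * (gtinv m v).2 - g m v * (gtinv v m).2)));
  last by move=> m _; rewrite -big_split; apply: eq_bigr => v _; exact: Hpt.
rewrite big_split /= big1 ?add0r; last by move=> m _; exact: Hd_m.
rewrite (eq_bigr (fun m => \sum_(v < n) g m v * (gtinv m v).2 - \sum_(v < n) g m v * (gtinv v m).2));
  last by move=> m _; rewrite sumrB.
rewrite sumrB; apply/eqP; rewrite subr_eq0; apply/eqP.
rewrite [RHS]exchange_big; apply: eq_bigr => m _; apply: eq_bigr => v _.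
by rewrite Hs.
Qed.
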